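(* In the setting described in the context, assume $$\sum_{x\in A}\alpha_x<\sum_{y\in N(A)}\beta_y\qquad\text{for all nonempty } A\subseteq\mathcal X,$$ where $N(A)=\bigcup_{x\in A}N_x$. Then $W(t)$, restricted to the set $\mathcal W$ of allocation states, is an ergodic time-reversible Markov process whose unique invariant probability measure is $$\mu_\gamma(W)=\frac{\binom{\alpha}{W}e^{\gamma\Psi(W)}}{\sum_{W'\in\mathcal W}\binom{\alpha}{W'}e^{\gamma\Psi(W')}},\qquad W\in\mathcal W,$$ where $\binom{\alpha}{W}=\frac{\prod_x\alpha_x!}{\prod_{x,y}W_{xy}!}$ and $\Psi(W)=\sum_{y}\sum_{s=0}^{W_y}[\lambda_y-k_cs/\beta_y]+k_a\sum_{x,y}\sum_{s=0}^{W_{xy}}s$.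
   Context: $\mathcal X$ is a finite set of units, $\mathcal G=(\mathcal X,\mathcal E)$ a directed graph, $N_x=\{y:(x,y)\in\mathcal E\}$, $\alpha_x,\beta_x$ non-negative integers. A partial allocation state is a matrix $W\in\mathbb N^{\mathcal X\times\mathcal X}$ with $W_{xy}=0$ whenever $(x,y)\notin\mathcal E$, $W^x:=\sum_yW_{xy}\le\alpha_x$, $W_y:=\sum_xW_{xy}\le\beta_y$; it is an allocation state if $W^x=\alpha_x$ for all $x$; $\mathcal W_p,\mathcal W$ denote these sets; $e_{xy}$ is the matrix unit. Fix reals $\lambda_y$, $k_c,k_a\ge0$, $\gamma>0$, and let $f_{xy}(W)=\lambda_y-k_cW_y/\beta_y+k_aW_{xy}$ (in $\Psi$ the $s=0$ term contributes $\lambda_y$). Let $\mathcal X^x(W)=\{y\in N_x:W_y<\beta_y\}$ and $p_y(W,x)=e^{\gamma f_{xy}(W+e_{xy})}/\sum_{y'\in\mathcal X^x(W)}e^{\gamma f_{xy'}(W+e_{xy'})}$. Let $P_{\rm all}(W,x),P_{\rm dis}(W,x)\ge0$ with sum $1$, $P_{\rm all}(W,x)=0$ if $W^x=\alpha_x$, $P_{\rm dis}(W,x)=0$ if $W^x=0$. $W(t)$ is the continuous-time Markov process on $\mathcal W_p$ in which each unit $x$ activates at the times of an independent Poisson clock of rate $\nu_x$, where (standing assumption of the paper) $\nu_x=\nu\alpha_x$ for some $\nu>0$; upon activation in state $W$, with probability $P_{\rm all}(W,x)$ unit $x$ chooses $y^*\in\mathcal X^x(W)$ with probability $p_{y^*}(W,x)$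 and the state becomes $W+e_{xy^*}$ (nothing happens if $\mathcal X^x(W)=\emptyset$); with probability $P_{\rm dis}(W,x)$ it chooses $\bar y$ with probability $W_{x\bar y}/W^x$, then $y^*\in\mathcal X^x(W-e_{x\bar y})$ with probability $p_{y^*}(W-e_{x\bar y},x)$, and the state becomes $W-e_{x\bar y}+e_{xy^*}$. From an allocation state only distribution moves occur, so $\mathcal W$ is closed under the dynamics. *)

(* Defs.v *)
From HB Require Import structures.
From mathcomp Require Import all_boot all_order all_algebra.
From mathcomp Require Import reals sequences exp.
Unset Printing Implicit Defensive.
Import Order.TTheory GRing.Theory Num.Theory.
Local Open Scope ring_scope.

Definition natmat (X : finType) := X -> X -> nat.

Section Model.
Variables (R : realType) (X : finType) (E : rel X) (alpha beta : X -> nat).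
Variables (lam : X -> R) (kc ka gamma nu : R).
Variables (Pall Pdis : natmat X -> X -> R).

Definition rowsum (W : natmat X) (x : X) : nat := (\sum_(y : X) W x y)%N.
Definition colsum (W : natmat X) (y : X) : nat := (\sum_(x : X) W x y)%N.

Definition partial_state (W : natmat X) : bool :=
  [&& [forall x, forall y, ~~ E x y ==> (W x y == 0%N)],
      [forall x, rowsum W x <= alpha x]%N &
      [forall y, colsum W y <= beta y]%N].
Definition alloc_state (W : natmat X) : bool :=
  partial_state W && [forall x, rowsum W x == alpha x].

Definition addE (W : natmat X) (x y : X) : natmat X :=
  fun a b => (W a b + ((a == x) && (b == y)))%N.
Definition subE (W : natmat X) (x y : X) : natmat X :=
  fun a b => (W a b - ((a == x) && (b == y)))%N.

Definition eqmat (W W' : natmat X) : bool := [forall a, forall b, W a b == W' a b].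

Definition fxy (x y : X) (W : natmat X) : R :=
  lam y - kc * (colsum W y)%:R / (beta y)%:R + ka * (W x y)%:R.

Definition avail (W : natmat X) (x y : X) : bool := E x y && (colsum W y < beta y)%N.

Definition pchoice (W : natmat X) (x y : X) : R :=
  if avail W x y then
    expR (gamma * fxy x y (addE W x y)) /
    \sum_(y' | avail W x y') expR (gamma * fxy x y' (addE W x y'))
  else 0.

(* jump rate from W to W' of the process W(t): unit x activates at rate
   nu_x = nu * alpha_x, then allocates or redistributes as described. *)
Definition rate (W W' : natmat X) : R :=
  \sum_(x : X) nu * (alpha x)%:R *
    (Pall W x * \sum_(y : X) pchoice W x y * (eqmat (addE W x y) W')%:R
     + Pdis W x * \sum_(yb : X) ((W x yb)%:R / (rowsum W x)%:R) *
         \sum_(y : X) pchoice (subE W x yb) x y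
                      * (eqmat (addE (subE W x yb) x y) W')%:R).

Definition multinom (W : natmat X) : R :=
  (\prod_(x : X) (alpha x)`!)%:R / (\prod_(x : X) \prod_(y : X) (W x y)`!)%:R.
Definition Psi (W : natmat X) : R :=
  \sum_(y : X) \sum_(0 <= s < (colsum W y).+1) (lam y - kc * s%:R / (beta y)%:R)
  + ka * \sum_(x : X) \sum_(y : X) \sum_(0 <= s < (W x y).+1) (s%:R : R).

(* Finite encoding of the state space: every allocation state has entries
   W_xy <= alpha_x <= max alpha < bnd, so it is represented exactly once
   by an element of [state]. *)
Definition bnd : nat := (\max_(x : X) alpha x).+1.
Definition state := {ffun X * X -> 'I_bnd}.
Definition toMat (s : state) : natmat X := fun x y => nat_of_ord (s (x, y)).
Definition allocS (s : state) : bool := alloc_state (toMat s).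

Definition Qgen (s s' : state) : R :=
  if s == s' then - \sum_(s'' | allocS s'' && (s'' != s)) rate (toMat s) (toMat s'')
  else rate (toMat s) (toMat s').

Definition gibbs_weight (s : state) : R := multinom (toMat s) * expR (gamma * Psi (toMat s)).
Definition mu (s : state) : R :=
  gibbs_weight s / \sum_(s' | allocS s') gibbs_weight s'.

Definition jump : rel state :=
  fun s s' => [&& allocS s, allocS s' & 0 < rate (toMat s) (toMat s')].

Definition nbhd (A : {set X}) : {set X} := [set y | [exists x in A, E x y]].
End Model.

(* Main.v *)
Require Import Defs.
From HB Require Import structures.
From mathcomp Require Import all_boot all_order all_algebra.
From mathcomp Require Import reals sequences exp.
From Stdlib Require Import FunctionalExtensionality.
From mathcomp Require Import zify ring lra.
Import Order.TTheory GRing.Theory Num.Theory.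
Set Implicit Arguments. Unset Strict Implicit.

Section Comb.
Variables (X : finType) (E : rel X) (alpha beta : X -> nat).

Notation rs := (rowsum X).
Notation cs := (colsum X).
Notation partial := (partial_state X E alpha beta).
Notation alloc := (alloc_state X E alpha beta).

Lemma partialP W : reflect [/\ (forall x y, ~~ E x y -> W x y = 0%N),
  (forall x, rs W x <= alpha x) & (forall y, cs W y <= beta y)] (partial W).
Proof.
apply: (iffP and3P) => [[/forallP H1 /forallP H2 /forallP H3]|[H1 H2 H3]]; split.
- by move=> x y Hxy; have /forallP/(_ y) := H1 x; rewrite Hxy /= => /eqP.
- by move=> x; apply: H2.
- by move=> y; apply: H3.
- by apply/forallP=> x; apply/forallP=> y; apply/implyP=> /H1 ->.
- by apply/forallP.
- by apply/forallP.
Qed.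

Lemma allocP W : reflect (partial W /\ forall x, rs W x = alpha x) (alloc W).
Proof.
apply: (iffP andP) => [[H /forallP H2]|[H H2]]; split => //.
- by move=> x; apply/eqP.
- by apply/forallP=> x; rewrite H2.
Qed.

Lemma sum_ind (x : X) (b : bool) : (\sum_(a : X) ((a == x) && b) = b)%N.
Proof.
rewrite (bigD1 x) //= eqxx big1 ?addn0 // => a /negbTE ->; by [].
Qed.

Lemma sum_ind2 (y : X) (b : bool) : (\sum_(a : X) (b && (a == y)) = b)%N.
Proof.
rewrite (bigD1 y) //= eqxx andbT big1 ?addn0 // => a /negbTE ->; by rewrite andbF.
Qed.

Lemma cs_addE W x y c : cs (addE X W x y) c = (cs W c + (c == y))%N.
Proof. by rewrite /colsum /addE big_split /= sum_ind. Qed.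

Lemma rs_addE W x y a : rs (addE X W x y) a = (rs W a + (a == x))%N.
Proof. by rewrite /rowsum /addE big_split /= sum_ind2. Qed.

Lemma cs_subE W x b c : 0 < W x b -> cs (subE X W x b) c = (cs W c - (c == b))%N.
Proof.
move=> Hp; rewrite /colsum /subE.
case: (c =P b) => [->|Hc]; last first.
  by rewrite subn0; apply: eq_bigr => a _; rewrite andbF subn0.
rewrite (bigD1 x) //= [in RHS](bigD1 x) //= !eqxx /=.
rewrite (eq_bigr (fun a => W a b)); last by move=> a /negbTE ->; rewrite subn0.
lia.
Qed.

Lemma rs_subE W x b a : 0 < W x b -> rs (subE X W x b) a = (rs W a - (a == x))%N.
Proof.
move=> Hp; rewrite /rowsum /subE.
case: (a =P x) => [->|Hc]; last first.
  by rewrite subn0; apply: eq_bigr => c _; rewrite subn0.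
rewrite (bigD1 b) //= [in RHS](bigD1 b) //= ?eqxx /=.
rewrite (eq_bigr (fun c => W x c)); last by move=> c /negbTE ->; rewrite subn0.
lia.
Qed.

Lemma cs_ge W x b : W x b <= cs W b.
Proof. by rewrite /colsum (bigD1 x) //= leq_addr. Qed.

Lemma rs_ge W x b : W x b <= rs W x.
Proof. by rewrite /rowsum (bigD1 b) //= leq_addr. Qed.

Definition mv (W : natmat X) x b y := addE X (subE X W x b) x y.

Lemma mvE W x b y a c : mv W x b y a c =
  (W a c - ((a == x) && (c == b)) + ((a == x) && (c == y)))%N.
Proof. by []. Qed.

Lemma mv_id W x b : 0 < W x b -> mv W x b b = W.
Proof.
move=> Hp; apply: functional_extensionality => a; apply: functional_extensionality => c.
rewrite mvE; case: (a =P x) => [->|]; case: (c =P b) => [->|] //=; lia.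
Qed.

Lemma cs_mv W x b y c : 0 < W x b ->
  cs (mv W x b y) c = (cs W c - (c == b) + (c == y))%N.
Proof. by move=> Hp; rewrite /mv cs_addE cs_subE. Qed.

Lemma rs_mv W x b y a : 0 < W x b -> rs (mv W x b y) a = rs W a.
Proof.
move=> Hp; rewrite /mv rs_addE rs_subE //.
case: (a =P x) => [->|_] /=; last by rewrite subn0 addn0.
have: 0 < rs W x by rewrite /rowsum (bigD1 b) //= ltn_addr.
lia.
Qed.

Definition step (P : pred X) (W W' : natmat X) : Prop :=
  exists x b y, [/\ P x && (0 < W x b), E x y, cs W y < beta y, b != y & W' = mv W x b y].

Inductive reach (P : pred X) : natmat X -> natmat X -> Prop :=
| reach0 W : reach P W W
| reachS W1 W2 W3 : step P W1 W2 -> reach P W2 W3 -> reach P W1 W3.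

Lemma reach_trans P W1 W2 W3 : reach P W1 W2 -> reach P W2 W3 -> reach P W1 W3.
Proof. by elim=> // A B C HAB _ IH HC; apply: reachS HAB (IH HC). Qed.

Lemma reach_mono (P Q : pred X) W W' : (forall x, P x -> Q x) -> reach P W W' -> reach Q W W'.
Proof.
move=> HPQ; elim=> [A|A B C [x [b [y [/andP[Px H1] H2 H3 H4 H5]]]] _ IH]; first exact: reach0.
by apply: reachS IH; exists x, b, y; split => //; rewrite H1 HPQ.
Qed.

Lemma step_partial P W W' : partial W -> step P W W' -> partial W'.
Proof.
move=> /partialP [H1 H2 H3] [x [b [y [/andP[Px Hb] Hy Hc Hby ->]]]].
apply/partialP; split.
- move=> a c Hac; rewrite mvE H1 //.
  case: (a =P x) => [Ha|] //=; case: (c =P y) => [Hcy|] //=.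
  by subst; rewrite Hy in Hac.
- by move=> a; rewrite rs_mv.
- move=> c; rewrite cs_mv //; have := H3 c.
  case: (c =P b) => [->|_]; first by rewrite (negbTE Hby) /=; lia.
  by case: (c =P y) => [->|_] /=; lia.
Qed.

Lemma step_rs P W W' a : step P W W' -> rs W' a = rs W a.
Proof. by move=> [x [b [y [/andP[_ Hb] _ _ _ ->]]]]; rewrite rs_mv. Qed.

Lemma step_rows P W W' a c : step P W W' -> ~~ P a -> W' a c = W a c.
Proof.
move=> [x [b [y [/andP[Px _] _ _ _ ->]]]] Pa; rewrite mvE.
by case: (a =P x) => [Ha|] /=; [rewrite Ha Px in Pa | rewrite subn0 addn0].
Qed.

Lemma step_sym P W W' : partial W -> step P W W' -> step P W' W.
Proof.
move=> /partialP [H1 H2 H3] [x [b [y [/andP[Px Hb] Hy Hc Hby ->]]]].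
have Hyb : (y == b) = false by rewrite eq_sym; exact: negbTE.
exists x, y, b; split => //.
- rewrite Px /=. by rewrite mvE !eqxx /= Hyb /=; lia.
- by apply/negPn/negP => /H1 Hx; rewrite Hx in Hb.
- rewrite cs_mv // eqxx (negbTE Hby) /=; have := H3 b; have := cs_ge W x b; lia.
- by rewrite eq_sym.
- apply: functional_extensionality => a; apply: functional_extensionality => c.
  rewrite !mvE; case: (a =P x) => [->|] //=; last by rewrite !subn0 !addn0.
  case: (c =P b) => [->|_]; first by rewrite ?Hyb ?(negbTE Hby) /=; lia.
  by case: (c =P y) => [->|_] /=; lia.
Qed.

Lemma reach_partial P W W' : reach P W W' -> partial W -> partial W'.
Proof. by elim=> // A B C HAB _ IH HA; apply: IH; apply: step_partial HAB. Qed.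

Lemma reach_rs P W W' a : reach P W W' -> rs W' a = rs W a.
Proof. by elim=> // A B C HAB _ IH; rewrite IH (step_rs _ HAB). Qed.

Lemma reach_rows P W W' a c : reach P W W' -> ~~ P a -> W' a c = W a c.
Proof. by move=> H Pa; elim: H => // A B C HAB _ IH; rewrite IH (step_rows _ HAB). Qed.

Lemma reach_sym P W W' : reach P W W' -> partial W -> reach P W' W.
Proof.
elim=> [A|A B C HAB _ IH] HA; first exact: reach0.
apply: reach_trans (IH (step_partial HA HAB)) _.
by apply: reachS (reach0 _ _); apply: step_sym.
Qed.

Lemma mv_reach (P : pred X) W x b y : P x -> 0 < W x b -> E x y -> (cs W y < beta y) || (y == b) ->
  reach P W (mv W x b y).
Proof.
move=> Px Hb Hy; case: (y =P b) => [->|Hyb]; first by rewrite mv_id //; constructor.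
rewrite orbF => Hc; apply: reachS (reach0 _ _).
by exists x, b, y; split => //; [rewrite Px Hb | apply/eqP => /esym].
Qed.


Lemma cs_mv_free W x b y : partial W -> 0 < W x b -> cs W y < beta y ->
  cs (mv W x b y) b < beta b.
Proof.
move=> /partialP [_ _ H3] Hb Hy; rewrite cs_mv // eqxx.
have := cs_ge W x b; have := H3 b.
case: (b =P y) => [Hby|_] /=; [subst y|]; lia.
Qed.

Lemma addE_partial W x y : partial W -> E x y -> rs W x < alpha x -> cs W y < beta y ->
  partial (addE X W x y).
Proof.
move=> /partialP [H1 H2 H3] Hxy Hr Hc; apply/partialP; split.
- move=> a c Hac; rewrite /addE H1 //.
  case: (a =P x) => [Ha|] //=; case: (c =P y) => [Hcy|] //=.
  by subst; rewrite Hxy in Hac.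
- move=> a; rewrite rs_addE; have := H2 a.
  by case: (a =P x) => [->|_] /=; lia.
- move=> c; rewrite cs_addE; have := H3 c.
  by case: (c =P y) => [->|_] /=; lia.
Qed.

Hypothesis hall : forall A : {set X}, A != set0 ->
  (\sum_(x in A) alpha x < \sum_(y in nbhd X E A) beta y)%N.

Lemma hall_free W (A : {set X}) : partial W -> A != set0 ->
  (forall a y x, a \in A -> E a y -> 0 < W x y -> x \in A) ->
  exists a y, [/\ a \in A, E a y & cs W y < beta y].
Proof.
move=> /partialP [H1 H2 H3] A0 Hcl.
case: (boolP [exists a in A, exists y, E a y && (cs W y < beta y)]).
  by move=> /exists_inP [a Ha /existsP [y /andP [Hy Hc]]]; exists a, y.
move=> Hn; exfalso.
have Hsat : forall y, y \in nbhd X E A -> beta y <= cs W y.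
  move=> y; rewrite inE => /exists_inP [a Ha Hay]; rewrite leqNgt; apply/negP => Hc.
  by move/negP: Hn; apply; apply/exists_inP; exists a => //; apply/existsP; exists y; rewrite Hay Hc.
have := hall A0; rewrite ltnNge => /negP; apply.
apply: (@leq_trans (\sum_(y in nbhd X E A) cs W y)); first by apply: leq_sum.
rewrite /colsum.
have -> : (\sum_(y in nbhd X E A) \sum_x W x y = \sum_(y in nbhd X E A) \sum_(x in A) W x y)%N.
  apply: eq_bigr => y Hy; rewrite [in LHS](bigID (mem A)) /= [X in _ + X = _]big1 ?addn0 // => x Hx.
  apply/eqP; rewrite -leqn0 leqNgt; apply/negP => Hp.
  move: Hy; rewrite inE => /exists_inP [a Ha Hay].
  by rewrite (Hcl a y x Ha Hay Hp) in Hx.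
rewrite exchange_big /=; apply: leq_sum => x Hx; apply: leq_trans (H2 x).
by rewrite /rowsum [X in (_ <= X)%N](bigID (mem (nbhd X E A))) /= leq_addr.
Qed.

Definition eW W : rel X := fun a x => [exists y, E a y && (0 < W x y)].

Lemma push (p : seq X) W : partial W -> forall z b, 0 < W z b -> path (eW W) z p ->
  uniq (z :: p) -> (exists2 f, E (last z p) f & cs W f < beta f) ->
  exists W1, reach (fun x => x \in z :: p) W W1 /\ cs W1 b < beta b.
Proof.
move=> HW; elim: p => [|z1 p IH] z b Hb.
  move=> _ _ [f Hf Hc] /=; exists (mv W z b f); split; last exact: cs_mv_free.
  by apply: mv_reach => //; [rewrite inE eqxx | rewrite Hc].
move=> /= /andP [/existsP [y1 /andP [Hzy1 Hy1]] Hp] /andP [Hnz Hu] Hf.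
have [W2 [HR Hc2]] := IH z1 y1 Hy1 Hp Hu Hf.
have HW2 := reach_partial HR HW.
have Hzb : W2 z b = W z b.
  exact: (reach_rows b HR Hnz).
exists (mv W2 z b y1); split; last by apply: cs_mv_free => //; rewrite Hzb.
apply: reach_trans (reach_mono _ HR) (mv_reach _ _ _ _).
- by move=> x Hx; rewrite inE Hx orbT.
- by rewrite inE eqxx.
- by rewrite Hzb.
- exact: Hzy1.
- by rewrite Hc2.
Qed.

Lemma augment W x0 : partial W -> rs W x0 < alpha x0 ->
  exists W', partial W' /\ forall x, rs W' x = (rs W x + (x == x0))%N.
Proof.
move=> HW Hx0.
set A := [set x | connect (eW W) x0 x].
have A0 : A != set0 by apply/set0Pn; exists x0; rewrite inE connect0.
have Acl : forall a y x, a \in A -> E a y -> 0 < W x y -> x \in A.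
  move=> a y x; rewrite !inE => Ha Hay Hx; apply: connect_trans Ha (connect1 _).
  by apply/existsP; exists y; rewrite Hay Hx.
have [a [f [Ha Haf Hf]]] := hall_free HW A0 Acl.
move: Ha; rewrite inE => /connectP [p Hp Hl]; rewrite Hl in Haf; move: Haf.
case: (shortenP Hp) => p' Hp' Hu _.
case: p' Hp' Hu => [|z1 q] /=.
  move=> _ _ Haf; exists (addE X W x0 f); split; last by move=> x; rewrite rs_addE.
  exact: addE_partial.
move=> /andP [/existsP [y1 /andP [Hx0y1 Hy1]] Hq] /andP [Hnx Hu] Haf.
have [W1 [HR Hc1]] : exists W1, reach (fun x => x \in z1 :: q) W W1 /\ cs W1 y1 < beta y1.
  by apply: (push HW Hy1 Hq Hu); exists f.
have HW1 := reach_partial HR HW.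
exists (addE X W1 x0 y1); split; last by move=> x; rewrite rs_addE (reach_rs _ HR).
by apply: addE_partial => //; rewrite (reach_rs _ HR).
Qed.

Lemma exists_alloc : exists W, alloc W.
Proof.
suff H : forall k W, partial W -> (\sum_x (alpha x - rs W x))%N = k -> exists W, alloc W.
  apply: (H _ (fun _ _ => 0%N)) => //; apply/partialP; split => //.
  - by move=> x; rewrite /rowsum big1.
  - by move=> y; rewrite /colsum big1.
elim=> [|k IH] W HW Hk.
  exists W; apply/allocP; split => // x.
  have : (alpha x - rs W x <= 0)%N by rewrite -Hk (bigD1 x) //= leq_addr.
  by move/partialP: HW => [_ H2 _]; have := H2 x; lia.
case: (boolP [exists x, rs W x < alpha x]) => [/existsP [x0 Hx0]|Hn]; last first.
  exfalso; move: Hk; rewrite big1 // => x _; apply/eqP; rewrite subn_eq0 leqNgt.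
  by apply/negP => H; move/negP: Hn; apply; apply/existsP; exists x.
have [W' [HW' Hr]] := augment HW Hx0.
apply: (IH W' HW'); move: Hk; rewrite (bigD1 x0) //= [in X in _ -> X](bigD1 x0) //=.
have -> : (\sum_(x | x != x0) (alpha x - rs W' x) = \sum_(x | x != x0) (alpha x - rs W x))%N.
  by apply: eq_bigr => x /negbTE Hx; rewrite Hr Hx addn0.
by rewrite Hr eqxx; lia.
Qed.


Lemma supp W x y : partial W -> 0 < W x y -> E x y.
Proof. by move=> /partialP [H1 _ _] Hp; apply/negPn/negP => /H1 H; rewrite H in Hp. Qed.

Definition dd (a b : nat) := (a - b + (b - a))%N.
Definition dist (W W' : natmat X) := (\sum_x \sum_c dd (W x c) (W' x c))%N.

Lemma sum_lt (f g : X -> nat) c : (forall i, f i <= g i) -> f c < g c ->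
  (\sum_i f i < \sum_i g i)%N.
Proof.
move=> Hle Hc; rewrite (bigD1 c) //= [X in (_ < X)%N](bigD1 c) //=.
by rewrite -addSn leq_add // leq_sum.
Qed.

Lemma row_split W W' x c : rs W x = rs W' x -> W x c != W' x c ->
  exists b y, (W' x b < W x b) /\ (W x y < W' x y).
Proof.
move=> Hr Hc.
have Hb : exists b, W' x b < W x b.
  case: (boolP [exists b, W' x b < W x b]) => [/existsP [b Hb]|Hn]; first by exists b.
  have Hle : forall i, W x i <= W' x i.
    by move=> i; rewrite leqNgt; apply/negP => H; move/negP: Hn; apply; apply/existsP; exists i.
  have Hlt : W x c < W' x c by rewrite ltn_neqAle Hc Hle.
  by have := sum_lt Hle Hlt; rewrite -/(rowsum X W x) -/(rowsum X W' x) Hr ltnn.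
have Hy : exists y, W x y < W' x y.
  case: (boolP [exists y, W x y < W' x y]) => [/existsP [y Hy]|Hn]; first by exists y.
  have Hle : forall i, W' x i <= W x i.
    by move=> i; rewrite leqNgt; apply/negP => H; move/negP: Hn; apply; apply/existsP; exists i.
  have Hlt : W' x c < W x c by rewrite ltn_neqAle eq_sym Hc Hle.
  by have := sum_lt Hle Hlt; rewrite -/(rowsum X W x) -/(rowsum X W' x) Hr ltnn.
by case: Hb => b Hb; case: Hy => y Hy; exists b, y.
Qed.

Lemma dist_row (W W' V V' : natmat X) u b y :
  (forall x c, x != u -> dd (V x c) (V' x c) = dd (W x c) (W' x c)) ->
  (forall c, V u c + W' u c + (c == b) = W u c + V' u c + (c == y))%N ->
  W' u b < W u b -> W u y < W' u y ->
  (dist V V' + 2 = dist W W')%N.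
Proof.
move=> Hoth Hu Hb Hy.
have Hby : b != y by apply/eqP => Hby; subst; lia.
rewrite /dist (bigD1 u) //= [in RHS](bigD1 u) //=.
have -> : (\sum_(x | x != u) \sum_c dd (V x c) (V' x c) =
    \sum_(x | x != u) \sum_c dd (W x c) (W' x c))%N.
  by apply: eq_bigr => x Hx; apply: eq_bigr => c _; apply: Hoth.
suff : (\sum_c dd (V u c) (V' u c) + 2 = \sum_c dd (W u c) (W' u c))%N by lia.
have Hyb : y != b by rewrite eq_sym.
rewrite (bigD1 b) //= [in RHS](bigD1 b) //= (bigD1 y Hyb) /= [in RHS](bigD1 y Hyb) /=.
rewrite (eq_bigr (fun c => dd (W u c) (W' u c))); last first.
  move=> c /andP [Hcb Hcy]; have := Hu c; rewrite /dd (negbTE Hcb) (negbTE Hcy); lia.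
have := Hu b; have := Hu y; rewrite /dd !eqxx (negbTE Hby) eq_sym (negbTE Hby); lia.
Qed.

Lemma nodiff_eq (W W' : natmat X) : ~~ [exists x, exists c, W x c != W' x c] -> W = W'.
Proof.
move=> Hn; apply: functional_extensionality => x; apply: functional_extensionality => c.
by apply/eqP/negPn/negP => H; move/negP: Hn; apply; apply/existsP; exists x; apply/existsP; exists c.
Qed.

Lemma dist_pos (W W' : natmat X) x c : W x c != W' x c -> 0 < dist W W'.
Proof.
move=> H; apply: (@leq_trans (dd (W x c) (W' x c))).
  by rewrite /dd; move: H; case: ltngtP => //= *; lia.
by rewrite /dist (bigD1 x) //= (bigD1 c) //= -addnA leq_addr.
Qed.

Lemma reach_transl (P : pred X) W W1 : reach P W W1 -> forall W',
  (forall x c, P x -> W' x c = W x c) -> (forall c, cs W' c = cs W c) ->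
  reach P W' (fun x => if P x then W1 x else W' x) /\
  (forall c, cs (fun x => if P x then W1 x else W' x) c = cs W1 c).
Proof.
elim=> [A|A B C HAB _ IH] W' Hag Hcs.
  have -> : (fun x => if P x then A x else W' x) = W'.
    apply: functional_extensionality => x; case: ifP => // Px.
    by apply: functional_extensionality => c; rewrite Hag.
  by split; [constructor | exact: Hcs].
move: HAB => [x [b [y [/andP [Px Hb] Hy Hc Hby HB]]]].
have Hb' : 0 < W' x b by rewrite Hag.
have Hag' : forall a c, P a -> mv W' x b y a c = B a c.
  by move=> a c Pa; rewrite HB !mvE Hag.
have Hcs' : forall c, cs (mv W' x b y) c = cs B c.
  by move=> c; rewrite HB !cs_mv // Hcs.
have [IH1 IH2] := IH (mv W' x b y) Hag' Hcs'.
have Heq : (fun a => if P a then C a else mv W' x b y a) = (fun a => if P a then C a else W' a).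
  apply: functional_extensionality => a; case: ifP => // Pa.
  apply: functional_extensionality => c; rewrite mvE.
  by case: (a =P x) => [Hax|] /=; [rewrite Hax Px in Pa | rewrite subn0 addn0].
rewrite -Heq; split => //.
apply: reachS IH1; exists x, b, y; split => //; first by rewrite Px Hb'.
by rewrite Hcs.
Qed.

Definition T : pred X := fun _ => true.

Definition caseA (W W' : natmat X) :=
  [exists x, exists b, exists y, [&& W' x b < W x b, W x y < W' x y & cs W y < beta y]].

Lemma col_le W W' : alloc W -> alloc W' -> ~~ caseA W W' -> forall c, cs W' c <= cs W c.
Proof.
move=> /allocP [HW Hr] /allocP [HW' Hr'] Hn c.
case: (boolP [exists x, W x c < W' x c]) => [/existsP [x Hx]|Hn2].
  have Hne : W x c != W' x c by rewrite ltn_eqF.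
  have [b [y [Hb _]]] := @row_split W W' x c (etrans (Hr x) (esym (Hr' x))) Hne.
  have Hsat : beta c <= cs W c.
    rewrite leqNgt; apply/negP => Hc; move/negP: Hn; apply; apply/existsP; exists x.
    by apply/existsP; exists b; apply/existsP; exists c; rewrite Hb Hx Hc.
  by move/partialP: HW' => [_ _ H3]; exact: leq_trans (H3 c) Hsat.
apply: leq_sum => x _; rewrite leqNgt; apply/negP => H; move/negP: Hn2; apply.
by apply/existsP; exists x.
Qed.

Lemma path_all (e : rel X) (Q : pred X) z q :
  path (fun a x => e a x && Q x) z q -> all Q q.
Proof. by elim: q z => //= x q IH z /andP [/andP [_ ->] /IH]. Qed.

Lemma path_sub (e : rel X) (Q : pred X) z q :
  path (fun a x => e a x && Q x) z q -> path e z q.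
Proof. by elim: q z => //= x q IH z /andP [/andP [-> _] /IH]. Qed.

Lemma rowA (w w' : X -> nat) b y c : w' b < w b -> w y < w' y ->
  (w c - (c == b) + (c == y) + w' c + (c == b) = w c + w' c + (c == y))%N.
Proof.
move=> Hb Hy; have Hby : b != y by apply/eqP => Heq; subst; lia.
case: (c =P b) => [->|_]; [rewrite (negbTE Hby) /=; lia|].
by case: (c =P y) => [->|_] /=; lia.
Qed.

Lemma rowA' (w w' : X -> nat) b y c : w' b < w b -> w y < w' y ->
  (w c + w' c + (c == b) = w c + (w' c - (c == y) + (c == b)) + (c == y))%N.
Proof.
move=> Hb Hy; have Hby : b != y by apply/eqP => Heq; subst; lia.
case: (c =P b) => [->|_]; [rewrite (negbTE Hby) /=; lia|].
by case: (c =P y) => [->|_] /=; lia.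
Qed.

Lemma rowB (w w' : X -> nat) b y v c : w' b < w b -> w y < w' y ->
  (w c - (c == b) + (c == v) + w' c + (c == b) = w c + (w' c - (c == y) + (c == v)) + (c == y))%N.
Proof.
move=> Hb Hy; have Hby : b != y by apply/eqP => Heq; subst; lia.
case: (c =P b) => [->|_]; [rewrite (negbTE Hby) /=; lia|].
by case: (c =P y) => [->|_] /=; lia.
Qed.

Lemma improve W W' : alloc W -> alloc W' -> [exists x, exists c, W x c != W' x c] ->
  exists V V', [/\ reach T W V, reach T W' V' & (dist V V' + 2 = dist W W')%N].
Proof.
move=> HWa HW'a Hdiff.
have [HW Hr] := allocP _ HWa; have [HW' Hr'] := allocP _ HW'a.
have Hrr : forall x, rs W x = rs W' x by move=> x; rewrite Hr Hr'.
case: (boolP (caseA W W')) => [/existsP [x /existsP [b /existsP [y /and3P [Hb Hy Hc]]]]|HnA].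
  exists (mv W x b y), W'; split.
  - by apply: mv_reach => //; [lia | apply: (supp HW'); lia | rewrite Hc].
  - by constructor.
  - apply: (@dist_row W W' _ _ x b y) => //.
      by move=> a c Hax; rewrite mvE (negbTE Hax) /= subn0 addn0.
    by move=> c; rewrite mvE eqxx /=; apply: rowA.
case: (boolP (caseA W' W)) => [/existsP [x /existsP [y /existsP [b /and3P [Hy Hb Hc]]]]|HnA'].
  exists W, (mv W' x y b); split.
  - by constructor.
  - by apply: mv_reach => //; [lia | apply: (supp HW); lia | rewrite Hc].
  - apply: (@dist_row W W' _ _ x b y) => //.
      by move=> a c Hax; rewrite mvE (negbTE Hax) /= subn0 addn0.
    by move=> c; rewrite mvE eqxx /=; apply: rowA'.
have Hcs : forall c, cs W' c = cs W c.
  by move=> c; apply/eqP; rewrite eqn_leq (col_le HWa HW'a HnA) (col_le HW'a HWa HnA').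
pose touched x := [exists c, W x c != W' x c].
pose e' := fun a x => eW W a x && ~~ touched x.
pose A := [set x | [exists z, touched z && connect e' z x]].
have A0 : A != set0.
  move/existsP: Hdiff => [x Hx]; apply/set0Pn; exists x; rewrite inE.
  by apply/existsP; exists x; apply/andP; split; [exact: Hx | exact: connect0].
have Acl : forall a y x, a \in A -> E a y -> 0 < W x y -> x \in A.
  move=> a y x; rewrite !inE => /existsP [z /andP [Hz Hza]] Hay Hxy.
  case: (boolP (touched x)) => Htx; first by apply/existsP; exists x; rewrite Htx connect0.
  apply/existsP; exists z; apply/andP; split; first exact: Hz.
  apply: connect_trans Hza (connect1 _).
  by rewrite /e' Htx andbT; apply/existsP; exists y; rewrite Hay Hxy.
have [a [f [Ha Haf Hf]]] := hall_free HW A0 Acl.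
have [u0 [v [S [W1 [Hu0 Hu0v HS HR Hv]]]]] : exists u0 v (S : pred X) W1,
    [/\ touched u0, E u0 v, (forall x, S x -> ~~ touched x), reach S W W1 & cs W1 v < beta v].
  move: Ha; rewrite inE => /existsP [z /andP [Hz /connectP [p Hp Hl]]].
  rewrite Hl in Haf; move: Haf; case: (shortenP Hp) => p' Hp' Hu _.
  case: p' Hp' Hu => [|u1 q] /=.
    move=> _ _ Haf; exists z, f, (fun _ => false), W; split => //; constructor.
  move=> /andP [/andP [/existsP [y1 /andP [Hzy1 Hy1]] Hu1] Hq] /andP [_ Hu] Haf.
  have [W1 [HR Hc1]] := push HW Hy1 (path_sub Hq) Hu (ex_intro2 _ _ f Haf Hf).
  exists z, y1, (fun x => x \in u1 :: q), W1; split => //.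
  move=> x; rewrite inE => /orP [/eqP ->|Hx] //.
  by have := path_all Hq => /allP /(_ x Hx).
have Hagree : forall x c, S x -> W' x c = W x c.
  move=> x c /HS Hx; apply/eqP; rewrite eq_sym; apply/negPn/negP => H; move/negP: Hx; apply.
  by apply/existsP; exists c.
have [HR' Hcs'] := reach_transl HR Hagree Hcs.
set W1' := (fun x => if S x then W1 x else W' x) in HR' Hcs'.
have HSu0 : S u0 = false by apply/negP => /HS; rewrite Hu0.
have [c0 Hc0] := existsP Hu0.
have [b [y [Hb Hy]]] := row_split (Hrr u0) Hc0.
have HW1 : forall c, W1 u0 c = W u0 c by move=> c; apply: (reach_rows c HR); rewrite HSu0.
have HW1' : forall c, W1' u0 c = W' u0 c by move=> c; rewrite /W1' HSu0.
exists (mv W1 u0 b v), (mv W1' u0 y v); split.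
- apply: (reach_trans (reach_mono _ HR) (mv_reach _ _ _ _)).
  + by [].
  + by [].
  + by rewrite HW1; exact: leq_ltn_trans (leq0n _) Hb.
  + exact: Hu0v.
  + by rewrite Hv.
- apply: (reach_trans (reach_mono _ HR') (mv_reach _ _ _ _)).
  + by [].
  + by [].
  + by rewrite HW1'; exact: leq_ltn_trans (leq0n _) Hy.
  + exact: Hu0v.
  + by rewrite Hcs' Hv.
- apply: (@dist_row W W' _ _ u0 b y) => //.
    move=> x c Hx; rewrite !mvE (negbTE Hx) /= !subn0 !addn0 /W1'.
    case: ifP => Sx; last by rewrite (reach_rows c HR) // Sx.
    by rewrite /dd (Hagree x c Sx) !subnn.
  by move=> c; rewrite !mvE eqxx /= HW1 HW1'; apply: rowB.
Qed.

Lemma alloc_conn W W' : alloc W -> alloc W' -> reach T W W'.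
Proof.
suff H : forall n W W', (dist W W' <= n)%N -> alloc W -> alloc W' -> reach T W W'.
  by move=> HW HW'; apply: (H _ W W' (leqnn _)).
clear W W'; elim=> [|n IH] W W' Hd HW HW';
  (case: (boolP [exists x, exists c, W x c != W' x c]) => [Hx|Hn];
   last by rewrite (nodiff_eq Hn); constructor).
  have [V [V' [_ _ Hdd]]] := improve HW HW' Hx; lia.
have [V [V' [HV HV' Hdd]]] := improve HW HW' Hx.
have HVa : alloc V.
  have [H1 H2] := allocP _ HW; apply/allocP; split; first exact: reach_partial HV H1.
  by move=> x; rewrite (reach_rs _ HV).
have HV'a : alloc V'.
  have [H1 H2] := allocP _ HW'; apply/allocP; split; first exact: reach_partial HV' H1.
  by move=> x; rewrite (reach_rs _ HV').
have HVV' := IH V V' ltac:(lia) HVa HV'a.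
apply: reach_trans HV (reach_trans HVV' _).
by apply: reach_sym HV' _; have [] := allocP _ HW'.
Qed.

End Comb.

Section Alg.
Variables (R : realType) (X : finType) (E : rel X) (alpha beta : X -> nat).
Variables (lam : X -> R) (kc ka gamma nu : R).
Variables (Pall Pdis : natmat X -> X -> R).
Hypothesis Hnu : (0 < nu)%R.
Hypothesis HP : forall W : natmat X, partial_state X E alpha beta W -> forall x : X,
     [/\ (0 <= Pall W x)%R, (0 <= Pdis W x)%R, (Pall W x + Pdis W x = 1)%R,
         rowsum X W x = alpha x -> Pall W x = 0%R &
         rowsum X W x = 0%N -> Pdis W x = 0%R].

Notation rs := (rowsum X).
Notation cs := (colsum X).
Notation partial := (partial_state X E alpha beta).
Notation alloc := (alloc_state X E alpha beta).
Notation pch := (pchoice R X E beta lam kc ka gamma).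
Notation rate := (rate R X E alpha beta lam kc ka gamma nu Pall Pdis).
Notation Psi := (Psi R X beta lam kc ka).
Notation fxy := (fxy R X beta lam kc ka).
Notation multinom := (multinom R X alpha).

Lemma zero_partial : partial (fun _ _ => 0%N).
Proof.
apply/partialP; split => //.
- by move=> x; rewrite /rowsum big1.
- by move=> y; rewrite /colsum big1.
Qed.

Lemma alpha_pos x : (0 < alpha x)%N.
Proof.
have [_ _ H1 H2 H3] := HP zero_partial x.
have Hr : rs (fun _ _ => 0%N) x = 0%N by rewrite /rowsum big1.
case: (posnP (alpha x)) => // Ha.
move: H1; rewrite H2 ?H3 // ?Hr ?Ha // addr0 => /eqP.
by rewrite eq_sym oner_eq0.
Qed.

Lemma eqmatP (A B : natmat X) : reflect (A = B) (eqmat X A B).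
Proof.
apply: (iffP forallP) => [H|->]; last by move=> a; apply/forallP => b.
apply: functional_extensionality => a; apply: functional_extensionality => b.
by have /forallP /(_ b) /eqP := H a.
Qed.

Local Open Scope ring_scope.

Lemma rate_alloc W W' : alloc W -> rate W W' =
  nu * \sum_x \sum_b \sum_y ((W x b)%:R * (pch (subE X W x b) x y * (eqmat X (mv W x b y) W')%:R)).
Proof.
move=> /(allocP E alpha beta) [HW Hr].
rewrite /Defs.rate mulr_sumr; apply: eq_bigr => x _.
have [_ _ H1 H2 _] := HP HW x.
rewrite (H2 (Hr x)) add0r in H1; rewrite (H2 (Hr x)) H1 mul0r add0r mul1r Hr.
have Ha : (alpha x)%:R != 0 :> R by rewrite pnatr_eq0 -lt0n alpha_pos.
rewrite -mulrA; congr (nu * _); rewrite mulr_sumr; apply: eq_bigr => b _.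
by rewrite mulrA [_ * (_ / _)]mulrC divfK // mulr_sumr.
Qed.

Lemma pch_ge0 V x y : 0 <= pch V x y.
Proof.
rewrite /pchoice; case: ifP => // _; apply: divr_ge0; first exact: ltW (expR_gt0 _).
by apply: sumr_ge0 => *; exact: ltW (expR_gt0 _).
Qed.

Lemma sum_gt0_one (I : finType) (F : I -> R) i0 : (forall i, 0 <= F i) -> 0 < F i0 ->
  0 < \sum_i F i.
Proof.
move=> H0 H1; rewrite (bigD1 i0) //=; apply: ltr_wpDr H1.
by apply: sumr_ge0 => *; apply: H0.
Qed.

Lemma pch_gt0 V x y : avail X E beta V x y -> 0 < pch V x y.
Proof.
move=> H; rewrite /pchoice H; apply: divr_gt0; first exact: expR_gt0.
rewrite (bigD1 y) //=; apply: ltr_wpDr (expR_gt0 _).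
by apply: sumr_ge0 => *; exact: ltW (expR_gt0 _).
Qed.

Lemma rate_ge0 W W' : alloc W -> 0 <= rate W W'.
Proof.
move=> HW; rewrite rate_alloc //; apply: mulr_ge0; first exact: ltW.
do 3 (apply: sumr_ge0 => ? _).
by apply: mulr_ge0 => //; apply: mulr_ge0 => //; apply: pch_ge0.
Qed.

Lemma rate_gt0 W x b y : alloc W -> (0 < W x b)%N -> E x y -> (cs W y < beta y)%N -> b != y ->
  0 < rate W (mv W x b y).
Proof.
move=> HW Hb Hy Hc Hby; rewrite rate_alloc //; apply: mulr_gt0 => //.
have Hnn : forall a b' y', 0 <= (W a b')%:R * (pch (subE X W a b') a y' * (eqmat X (mv W a b' y') (mv W x b y))%:R).
  by move=> *; apply: mulr_ge0 => //; apply: mulr_ge0 => //; apply: pch_ge0.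
apply: (sum_gt0_one (i0 := x)) => [a|]; first by do 2 (apply: sumr_ge0 => ? _); apply: Hnn.
apply: (sum_gt0_one (i0 := b)) => [a|]; first by apply: sumr_ge0 => ? _; apply: Hnn.
apply: (sum_gt0_one (i0 := y)) => [a|]; first by apply: Hnn.
apply: mulr_gt0; first by rewrite ltr0n.
rewrite (introT (eqmatP _ _) erefl) mulr1; apply: pch_gt0.
rewrite /avail Hy /= cs_subE // eq_sym (negbTE Hby) subn0 //.
Qed.


Definition g (W : natmat X) := multinom W * expR (gamma * Psi W).

Lemma prod_fact_addE V x b :
  (\prod_a \prod_c (addE X V x b a c)`!)%N = ((\prod_a \prod_c (V a c)`!) * (V x b).+1)%N.
Proof.
rewrite (bigD1 x) //= [in RHS](bigD1 x) //=.
rewrite (bigD1 b) //= [X in (_ = (X * _ * _)%N)](bigD1 b) //=.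
rewrite /addE !eqxx /= addn1 factS.
rewrite (eq_bigr (fun c => (V x c)`!)); last by move=> c /negbTE ->; rewrite addn0.
rewrite [X in (_ * X = _)%N](eq_bigr (fun a => \prod_c (V a c)`!)); last first.
  by move=> a /negbTE Ha; apply: eq_bigr => c _; rewrite Ha addn0.
ring.
Qed.

Lemma sum1_addE (F : X -> nat -> R) (n : X -> nat) c :
  \sum_y \sum_(0 <= s < (n y + (y == c)%N).+1) F y s =
  \sum_y \sum_(0 <= s < (n y).+1) F y s + F c (n c).+1.
Proof.
rewrite (bigD1 c) //= [in RHS](bigD1 c) //= eqxx addn1 big_nat_recr //=.
rewrite (eq_bigr (fun y => \sum_(0 <= s < (n y).+1) F y s)); last first.
  by move=> y /negbTE ->; rewrite addn0.
by rewrite -!addrA [_ + F _ _]addrC.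
Qed.

Lemma Psi_addE V x c : Psi (addE X V x c) = Psi V + fxy x c (addE X V x c).
Proof.
rewrite /Defs.Psi /Defs.fxy.
rewrite (eq_bigr (fun y => \sum_(0 <= s < (cs V y + (y == c)%N).+1)
   (lam y - kc * s%:R / (beta y)%:R))); last by move=> y _; rewrite cs_addE.
rewrite (sum1_addE (fun y s => lam y - kc * s%:R / (beta y)%:R)).
have -> : \sum_a \sum_y \sum_(0 <= s < (addE X V x c a y).+1) (s%:R : R) =
   \sum_a \sum_y \sum_(0 <= s < (V a y).+1) (s%:R : R) + (V x c).+1%:R.
  rewrite (bigD1 x) //= [in RHS](bigD1 x) //=.
  rewrite (eq_bigr (fun y => \sum_(0 <= s < (V x y + (y == c)%N).+1) (s%:R : R))); last first.
    by move=> y _; rewrite /addE eqxx.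
  rewrite (sum1_addE (fun (_ : X) (s : nat) => (s%:R : R)) (fun y => V x y)).
  rewrite [X in _ + X = _](eq_bigr (fun a => \sum_y \sum_(0 <= s < (V a y).+1) (s%:R : R))); last first.
    by move=> a /negbTE Ha; apply: eq_bigr => y _; rewrite /addE Ha addn0.
  by rewrite -!addrA [_ + _%:R]addrC.
rewrite cs_addE /addE !eqxx /= !addn1.
ring.
Qed.

Lemma dbal_core V x b y : avail X E beta V x b -> avail X E beta V x y ->
  g (addE X V x b) * ((addE X V x b x b)%:R * pch V x y) =
  g (addE X V x y) * ((addE X V x y x y)%:R * pch V x b).
Proof.
move=> Hb Hy.
rewrite /g /Defs.multinom /pchoice Hb Hy !prod_fact_addE !Psi_addE /addE !eqxx /= !addn1.
set Z := \sum_(y' | avail X E beta V x y') _.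
set PV := (\prod_a \prod_c (V a c)`!)%N.
have HPV : (PV%:R : R) != 0 by rewrite pnatr_eq0 -lt0n /PV prodn_gt0 // => a; rewrite prodn_gt0 // => c; rewrite fact_gt0.
have Hb1 : ((V x b).+1%:R : R) != 0 by rewrite pnatr_eq0.
have Hy1 : ((V x y).+1%:R : R) != 0 by rewrite pnatr_eq0.
rewrite !natrM !mulrDr !expRD.
field.
have Hn : forall n : nat, (1 + n%:R : R) != 0.
  by move=> n; rewrite -[1]/(1%:R) -natrD pnatr_eq0.
have HZ : Z != 0.
  rewrite gt_eqF // /Z (bigD1 y) //=; apply: ltr_wpDr (expR_gt0 _).
  by apply: sumr_ge0 => *; exact: ltW (expR_gt0 _).
by rewrite HZ HPV !Hn.
Qed.


Lemma key_mv (W : natmat X) (x b y : X) (W' : natmat X) : (0 < W x b)%N -> mv W x b y = W' ->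
  (0 < W' x y)%N /\ mv W' x y b = W.
Proof.
move=> Hb <-; case: (y =P b) => [Eyb|Nyb].
  by subst y; rewrite !mv_id.
have Hyb : (y == b) = false by apply/eqP.
have Hby : (b == y) = false by rewrite eq_sym.
split; first by rewrite mvE !eqxx /= Hyb /=; lia.
apply: functional_extensionality => a; apply: functional_extensionality => c.
rewrite !mvE; case: (a =P x) => [->|] //=; last by rewrite !subn0 !addn0.
case: (c =P b) => [->|_]; first by rewrite Hby /=; lia.
by case: (c =P y) => [->|_] /=; lia.
Qed.

Definition Tm (W W' : natmat X) (x b y : X) :=
  g W * ((W x b)%:R * (pch (subE X W x b) x y * (eqmat X (mv W x b y) W')%:R)).

Lemma Tm0 W W' x b y : ~~ ((0 < W x b)%N && eqmat X (mv W x b y) W') -> Tm W W' x b y = 0.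
Proof.
rewrite /Tm negb_and -leqNgt leqn0 => /orP [/eqP ->|/negbTE ->].
  by rewrite mul0r mulr0.
by rewrite !mulr0.
Qed.

Lemma Tm_sym W W' x b y : alloc W -> alloc W' -> Tm W W' x b y = Tm W' W x y b.
Proof.
move=> HWa HW'a.
have [HW _] := allocP _ _ _ _ HWa; have [HW' _] := allocP _ _ _ _ HW'a.
case: (boolP ((0 < W x b)%N && eqmat X (mv W x b y) W')) => [/andP [Hb /eqmatP Hmv]|Hn]; last first.
  rewrite Tm0 // Tm0 //; apply/negP => /andP [Hy /eqmatP Hmv'].
  have [Hb Hmv] := key_mv Hy Hmv'.
  by move/negP: Hn; apply; rewrite Hb; apply/eqmatP.
have [Hy Hmv'] := key_mv Hb Hmv.
rewrite /Tm (introT (eqmatP _ _) Hmv) (introT (eqmatP _ _) Hmv') !mulr1.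
set V := subE X W x b.
have EW : W = addE X V x b by rewrite -[LHS](mv_id Hb).
have EW' : W' = addE X V x y by rewrite -Hmv.
have EV' : subE X W' x y = V.
  rewrite EW'; apply: functional_extensionality => a; apply: functional_extensionality => c.
  by rewrite /addE /subE addnK.
have HVb : avail X E beta V x b.
  rewrite /avail (supp HW Hb) /= /V cs_subE // eqxx /=.
  have /partialP [_ _ H3] := HW; have := H3 b; have := cs_ge W x b; lia.
have HVy : avail X E beta V x y.
  rewrite /avail (supp HW' Hy) /=.
  have /partialP [_ _ H3] := HW'; have := H3 y; rewrite EW' cs_addE eqxx /=; lia.
rewrite EV'.
have := dbal_core HVb HVy; rewrite -EW -EW'.
by rewrite !mulrA.
Qed.

Lemma g_rate W W' : alloc W ->
  g W * rate W W' = nu * \sum_x \sum_b \sum_y Tm W W' x b y.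
Proof.
move=> HW; rewrite rate_alloc // mulrCA; congr (nu * _).
rewrite mulr_sumr; apply: eq_bigr => x _; rewrite mulr_sumr; apply: eq_bigr => b _.
by rewrite mulr_sumr.
Qed.

Lemma dbal W W' : alloc W -> alloc W' -> g W * rate W W' = g W' * rate W' W.
Proof.
move=> HW HW'; rewrite !g_rate //; congr (nu * _); apply: eq_bigr => x _.
rewrite exchange_big; apply: eq_bigr => y _; apply: eq_bigr => b _.
exact: Tm_sym.
Qed.

Local Close Scope ring_scope.
Hypothesis hall : forall A : {set X}, A != set0 ->
     (\sum_(x in A) alpha x < \sum_(y in nbhd X E A) beta y)%N.

Notation allocS := (allocS X E alpha beta).
Notation Q := (Qgen R X E alpha beta lam kc ka gamma nu Pall Pdis).
Notation mu := (mu R X E alpha beta lam kc ka gamma).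
Notation toMat := (toMat X alpha).
Notation jump := (jump R X E alpha beta lam kc ka gamma nu Pall Pdis).

Definition ofMat (W : natmat X) : state X alpha := [ffun p => inord (W p.1 p.2)].

Lemma toMat_ofMat W : alloc W -> toMat (ofMat W) = W.
Proof.
move=> /(allocP E alpha beta) [_ Hr].
apply: functional_extensionality => x; apply: functional_extensionality => y.
rewrite /Defs.toMat ffunE /= inordK // ltnS.
apply: leq_trans (rs_ge W x y) _; rewrite Hr.
exact: (leq_bigmax_cond x (P := xpredT)).
Qed.

Lemma ofMat_toMat s : ofMat (toMat s) = s.
Proof. by apply/ffunP => [[x y]]; rewrite ffunE /= inord_val. Qed.

Lemma reach_connect W W' : reach E beta (@T X) W W' -> alloc W -> connect jump (ofMat W) (ofMat W').
Proof.
elim=> [A|A B C HAB _ IH] HA; first exact: connect0.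
have HB : alloc B.
  have [H1 H2] := allocP _ _ _ _ HA; apply/allocP; split; first exact: step_partial H1 HAB.
  by move=> x; rewrite (step_rs _ HAB).
apply: connect_trans (connect1 _) (IH HB).
rewrite /Defs.jump /Defs.allocS !toMat_ofMat // HA HB /=.
move: HAB => [x [b [y [/andP [_ Hb] Hy Hc Hby ->]]]].
exact: rate_gt0.
Qed.


Local Open Scope ring_scope.
Lemma g_pos W : 0 < g W.
Proof.
apply: mulr_gt0; last exact: expR_gt0.
rewrite /Defs.multinom; apply: divr_gt0; rewrite ltr0n prodn_gt0 // => x.
  exact: fact_gt0.
by rewrite prodn_gt0 // => y; exact: fact_gt0.
Qed.


Lemma exS : exists s, allocS s.
Proof.
have [W HW] := exists_alloc hall; exists (ofMat W).
by rewrite /Defs.allocS toMat_ofMat.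
Qed.

Lemma connS s s' : allocS s -> allocS s' -> connect jump s s'.
Proof.
move=> Hs Hs'; rewrite -(ofMat_toMat s) -(ofMat_toMat s').
exact: reach_connect (alloc_conn hall Hs Hs') Hs.
Qed.

Definition Zs := \sum_(s | allocS s) g (toMat s).

Lemma muE s : mu s = g (toMat s) / Zs.
Proof. by []. Qed.

Lemma Zpos : 0 < Zs.
Proof.
have [s0 H0] := exS; rewrite /Zs (bigD1 s0) //=; apply: ltr_wpDr (g_pos _).
by apply: sumr_ge0 => *; apply: ltW (g_pos _).
Qed.

Lemma mu_pos s : 0 < mu s.
Proof. by rewrite muE; apply: divr_gt0 (g_pos _) Zpos. Qed.

Lemma mu_sum : \sum_(s | allocS s) mu s = 1.
Proof.
rewrite (eq_bigr (fun s => g (toMat s) * Zs^-1)) //.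
rewrite -mulr_suml -/Zs; apply: mulfV; by rewrite (gt_eqF Zpos).
Qed.

Lemma mu_db s s' : allocS s -> allocS s' ->
  mu s * rate (toMat s) (toMat s') = mu s' * rate (toMat s') (toMat s).
Proof.
move=> Hs Hs'. rewrite (muE s) (muE s'). 
rewrite mulrAC [RHS]mulrAC. 
rewrite (dbal Hs Hs'). 
by [].
Qed.

Lemma mu_inv s' : allocS s' -> \sum_(s | allocS s) mu s * Q s s' = 0.
Proof.
move=> H; rewrite (bigD1 s') //= {1}/Defs.Qgen eqxx.
have -> : \sum_(s | allocS s && (s != s')) mu s * Q s s' =
    \sum_(s | allocS s && (s != s')) mu s' * rate (toMat s') (toMat s).
  by apply: eq_bigr => s /andP [Hs Hne]; rewrite /Defs.Qgen (negbTE Hne) mu_db.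
by rewrite -mulr_sumr mulrN addNr.
Qed.

Lemma ex_max_seq (T : eqType) (F : T -> R) (s : seq T) i0 :
  exists i, ((i == i0) || (i \in s)) /\ F i0 <= F i /\ forall j, j \in s -> F j <= F i.
Proof.
elim: s => [|x s [i [Hi [H0 Hs]]]]; first by exists i0; rewrite eqxx lexx.
case: (leP (F x) (F i)) => Hx.
  exists i; split; first by move: Hi; rewrite inE; case: (i == i0) => //= ->; rewrite orbT.
  split => // j; rewrite inE => /orP [/eqP ->|/Hs] //.
exists x; split; first by rewrite inE eqxx orbT.
split; first exact: le_trans H0 (ltW Hx).
by move=> j; rewrite inE => /orP [/eqP ->|/Hs Hj] //; apply: le_trans Hj (ltW Hx).
Qed.

Lemma uniq_inv (pi : state X alpha -> R) :
  \sum_(s | allocS s) pi s = 1 ->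
  (forall s', allocS s' -> \sum_(s | allocS s) pi s * Q s s' = 0) ->
  forall s, allocS s -> pi s = mu s.
Proof.
move=> Hsum Hstat.
pose h s := pi s / mu s.
have Hmu : forall s, mu s != 0 by move=> s; rewrite gt_eqF // mu_pos.
have Hpi : forall s, pi s = h s * mu s by move=> s; rewrite /h divfK.
have harm : forall s1, allocS s1 ->
    \sum_(s | allocS s && (s != s1)) rate (toMat s1) (toMat s) * (h s - h s1) = 0.
  move=> s1 H1; have := Hstat s1 H1; rewrite (bigD1 s1) //= {1}/Defs.Qgen eqxx.
  have -> : \sum_(s | allocS s && (s != s1)) pi s * Q s s1 =
      \sum_(s | allocS s && (s != s1)) mu s1 * (h s * rate (toMat s1) (toMat s)).
    apply: eq_bigr => s /andP [Hs Hne]; rewrite /Defs.Qgen (negbTE Hne) Hpi -mulrA mu_db //.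
    by rewrite mulrCA.
  rewrite -mulr_sumr Hpi => H.
  apply: (mulfI (Hmu s1)); rewrite mulr0.
  have -> : \sum_(s | allocS s && (s != s1)) rate (toMat s1) (toMat s) * (h s - h s1) =
     \sum_(s | allocS s && (s != s1)) h s * rate (toMat s1) (toMat s) -
     h s1 * \sum_(s | allocS s && (s != s1)) rate (toMat s1) (toMat s).
    rewrite mulr_sumr -sumrB; apply: eq_bigr => s _.
    by rewrite mulrBr mulrC [h s1 * _]mulrC.
  move: H; set A := \sum_(s | _) h s * _; set B := \sum_(s | _) rate _ _.
  move=> H; rewrite mulrBr mulrA [mu s1 * h s1]mulrC.
  by rewrite mulrN in H; rewrite addrC.
have [s0 H0] := exS.
have [smax [Hsm [_ Hmax]]] := ex_max_seq h (enum [pred s | allocS s]) s0.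
have Hsmax : allocS smax by move: Hsm => /orP [/eqP ->|]; rewrite ?mem_enum ?inE.
have Hmax' : forall j, allocS j -> h j <= h smax.
  by move=> j Hj; apply: Hmax; rewrite mem_enum inE.
have prop : forall p s1, allocS s1 -> h s1 = h smax -> path jump s1 p -> h (last s1 p) = h smax.
  elim=> [|x p IH] s1 Hs1 Hh //= /andP [Hj Hp].
  move: (Hj); rewrite /Defs.jump => /and3P [_ Hx Hr].
  apply: (IH _ Hx _ Hp).
  case: (x =P s1) => [->|/eqP Hne] //.
  have Hterms : forall s, allocS s && (s != s1) ->
      0 <= - (rate (toMat s1) (toMat s) * (h s - h s1)).
    move=> s /andP [Hs _]; rewrite -mulrN; apply: mulr_ge0; first exact: rate_ge0.
    by rewrite oppr_ge0 subr_le0 Hh; apply: Hmax'.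
  have Hs0 : \sum_(s | allocS s && (s != s1)) - (rate (toMat s1) (toMat s) * (h s - h s1)) = 0.
    by rewrite sumrN harm // oppr0.
  have := psumr_eq0P Hterms Hs0 (i := x); rewrite Hx Hne => /(_ isT) /eqP.
  rewrite oppr_eq0 mulf_eq0 (gt_eqF Hr) /= subr_eq0 => /eqP ->; exact: Hh.
have Hall : forall s, allocS s -> h s = h smax.
  move=> s Hs; have /connectP [p Hp ->] := connS Hsmax Hs.
  exact: prop.
have HM : h smax = 1.
  rewrite -Hsum (eq_bigr (fun s => h smax * mu s)); last by move=> s Hs; rewrite Hpi Hall.
  by rewrite -mulr_sumr mu_sum mulr1.
by move=> s Hs; rewrite Hpi Hall // HM mul1r.
Qed.

Lemma main_sec :
  [/\ (exists s, allocS s) /\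
      (forall s s', allocS s -> allocS s' -> connect jump s s'),
      ((forall s, allocS s -> 0 < mu s) /\ \sum_(s | allocS s) mu s = 1),
      (forall s s', allocS s -> allocS s' ->
         mu s * rate (toMat s) (toMat s') = mu s' * rate (toMat s') (toMat s)),
      (forall s', allocS s' -> \sum_(s | allocS s) mu s * Q s s' = 0) &
      (forall pi : state X alpha -> R,
         (forall s, allocS s -> 0 <= pi s) -> \sum_(s | allocS s) pi s = 1 ->
         (forall s', allocS s' -> \sum_(s | allocS s) pi s * Q s s' = 0) ->
         forall s, allocS s -> pi s = mu s)].
Proof.
split.
- by split; [exact: exS | move=> s s'; exact: connS].
- by split; [move=> s _; exact: mu_pos | exact: mu_sum].
- by move=> s s'; exact: mu_db.
- exact: mu_inv.
- by move=> pi _; exact: uniq_inv.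
Qed.

End Alg.

Local Open Scope ring_scope.

Theorem corollary1 (R : realType) (X : finType) (E : rel X) (alpha beta : X -> nat)
  (lam : X -> R) (kc ka gamma nu : R) (Pall Pdis : natmat X -> X -> R) :
  0 <= kc -> 0 <= ka -> 0 < gamma -> 0 < nu ->
  (forall W : natmat X, partial_state X E alpha beta W -> forall x : X,
     [/\ 0 <= Pall W x, 0 <= Pdis W x, Pall W x + Pdis W x = 1,
         rowsum X W x = alpha x -> Pall W x = 0 &
         rowsum X W x = 0%N -> Pdis W x = 0]) ->
  (forall A : {set X}, A != set0 ->
     (\sum_(x in A) alpha x < \sum_(y in nbhd X E A) beta y)%N) ->
  let allocS := allocS X E alpha beta in
  let rate := rate R X E alpha beta lam kc ka gamma nu Pall Pdis in
  let Q := Qgen R X E alpha beta lam kc ka gamma nu Pall Pdis in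
  let mu := mu R X E alpha beta lam kc ka gamma in
  let toMat := toMat X alpha in
  [/\ (* the state space of allocation states is nonempty *)
      (exists s, allocS s) /\
      (* irreducibility (= ergodicity for a finite-state CTMC) *)
      (forall s s', allocS s -> allocS s' ->
         connect (jump R X E alpha beta lam kc ka gamma nu Pall Pdis) s s'),
      (* mu is a probability measure on allocation states *)
      ((forall s, allocS s -> 0 < mu s) /\ \sum_(s | allocS s) mu s = 1),
      (* time reversibility: detailed balance *)
      (forall s s', allocS s -> allocS s' ->
         mu s * rate (toMat s) (toMat s') = mu s' * rate (toMat s') (toMat s)),
      (* invariance *)
      (forall s', allocS s' -> \sum_(s | allocS s) mu s * Q s s' = 0) &
      (* uniqueness among invariant probability measures *)
      (forall pi : state X alpha -> R,
         (forall s, allocS s -> 0 <= pi s) -> \sum_(s | allocS s) pi s = 1 ->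
         (forall s', allocS s' -> \sum_(s | allocS s) pi s * Q s s' = 0) ->
         forall s, allocS s -> pi s = mu s)].
Proof.
move=> Hkc Hka Hg Hnu HP hall.
by apply: main_sec.
Qed.
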